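(* Consider the discrete first-price auction in the model with ties with $n=2$ bidders whose values are drawn independently and uniformly from $X=\{0,1,\dots,x\}$, where $x$ is odd. Then $\beta(v)=\lfloor v/2\rfloor$ is a symmetric equilibrium.
   Context: Model. Two risk-neutral bidders compete for one indivisible object. Values and bids lie in $X=\{0,1,2,\dots,x\}$; each bidder's value is drawn independently and uniformly from $X$. A (pure) strategy is a bidding function $\beta:X\to X$. In the model with ties, the higher bidder wins and, if the two bids are equal, each wins with probability $1/2$. In the first-price auction, a bidder with value $v_i$ bidding $b_i$ gets expected payoff $(v_i-b_i)\Pr(i\text{ wins})$. An equilibrium is a profile of bidding functions such that each bidder's bidding function maximises their expected payoff given the other's (a pure-strategy Bayes–Nash equilibrium) and such that no bidder uses a weakly dominated bidding function (a bidding function is weakly dominated if some other bidding function yields at least as high expected payoff against every opponent bidding function, and strictly higher against some). A symmetric equilibrium is an equilibrium in which both bidders use the same bidding function. *)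

(* Defs.v *)
From mathcomp Require Import all_boot all_order all_algebra.
Set Implicit Arguments. Unset Strict Implicit. Unset Printing Implicit Defensive.
Import Order.TTheory GRing.Theory Num.Theory.
Local Open Scope ring_scope.

Definition bidfun (x : nat) := 'I_(x.+1) -> 'I_(x.+1).

Definition win_prob (x : nat) (b c : 'I_(x.+1)) : rat :=
  if (c < b)%N then 1 else if b == c then 1 / 2%:R else 0.

(* Ex-ante expected payoff of the bidder using [b1] when the opponent uses [b2],
   values i.i.d. uniform on X: (v - b1 v) * Pr(win). *)
Definition payoff (x : nat) (b1 b2 : bidfun x) : rat :=
  \sum_(v : 'I_(x.+1)) \sum_(w : 'I_(x.+1))
     ((v%:R - (b1 v)%:R) * win_prob (b1 v) (b2 w)) / ((x.+1)%:R ^+ 2).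

Definition weakly_dominates (x : nat) (b' b : bidfun x) : Prop :=
  (forall g : bidfun x, payoff b g <= payoff b' g) /\
  (exists g : bidfun x, payoff b g < payoff b' g).

Definition weakly_dominated (x : nat) (b : bidfun x) : Prop :=
  exists b' : bidfun x, weakly_dominates b' b.

Definition is_equilibrium (x : nat) (b1 b2 : bidfun x) : Prop :=
  (forall b1' : bidfun x, payoff b1' b2 <= payoff b1 b2) /\
  (forall b2' : bidfun x, payoff b2' b1 <= payoff b2 b1) /\
  ~ weakly_dominated b1 /\ ~ weakly_dominated b2.

Definition is_symmetric_equilibrium (x : nat) (b : bidfun x) : Prop :=
  is_equilibrium b b.

Definition half_bid (x : nat) : bidfun x := fun v => inord (v./2).
Arguments half_bid : clear implicits.

(* Main.v *)
Require Import Defs.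
From mathcomp Require Import all_boot all_order all_algebra.
From mathcomp Require Import zify ring lra.
Set Implicit Arguments. Unset Strict Implicit. Unset Printing Implicit Defensive.
Import Order.TTheory GRing.Theory Num.Theory.
Local Open Scope ring_scope.

Definition hq (b c : nat) : rat :=
  if (c < b)%N then 1 else if b == c then 1 / 2%:R else 0.

Lemma wp_hq x (b c : 'I_(x.+1)) : win_prob b c = hq b c.
Proof. by []. Qed.

Lemma half_val x (w : 'I_(x.+1)) : (half_bid x w : nat) = w./2.
Proof.
rewrite /half_bid inordK // ltnS.
apply: leq_trans (half_leq (leq_ord w)) _.
rewrite leq_half_double; lia.
Qed.

Lemma sum_hq n b : \sum_(i < n) hq b i = if (b < n)%N then b%:R + 1 / 2%:R else n%:R.
Proof.
elim: n => [|n IH]; first by rewrite big_ord0.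
rewrite big_ord_recr /= IH /hq.
case: (ltngtP b n) => H.
- have -> : (b < n.+1)%N by lia.
  by rewrite addr0.
- have -> : (b < n.+1)%N = false by lia.
  by rewrite -natr1.
- subst b. by rewrite ltnSn.
Qed.

Lemma sum_double n (F : nat -> rat) :
  \sum_(i < n.*2) F (i./2) = \sum_(i < n) (F i + F i).
Proof.
elim: n => [|n IH]; first by rewrite !big_ord0.
rewrite doubleS !big_ord_recr /= IH.
rewrite uphalf_double doubleK addrA.
by [].
Qed.

Definition Sn (m b : nat) : nat := if (b <= m)%N then b.*2.+1 else m.*2.+2.

Lemma Sb x (hx : odd x) (b : 'I_(x.+1)) :
  \sum_(w : 'I_(x.+1)) win_prob b (half_bid x w) = (Sn x./2 b)%:R.
Proof.
have ex : x.+1 = (x./2).+1.*2.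
  by move: (odd_double_half x); rewrite hx doubleS; lia.
under eq_bigr => w _ do rewrite wp_hq half_val.
move: (nat_of_ord b) => {}b.
rewrite -(big_mkord xpredT (fun w => hq b w./2)) ex big_mkord sum_double.
rewrite big_split /= sum_hq /Sn ltnS.
case: ifP => _.
- have -> : (b.*2.+1)%:R = b%:R + b%:R + 1 :> rat by rewrite -addnn -natrD natr1.
  lra.
- have -> : (x./2.*2.+2)%:R = x./2%:R + x./2%:R + 1 + 1 :> rat.
    by rewrite -addnn -natrD !natr1.
  rewrite -natr1; lra.
Qed.

Lemma key_nat m k e b : (e <= 1)%N -> (k <= m)%N -> b != k ->
  ((k.*2 + e) * Sn m b + k * Sn m k < (k.*2 + e) * Sn m k + b * Sn m b)%N.
Proof.
move=> he hk hb; rewrite /Sn hk.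
case: ifP => hbm.
- case: (ltngtP b k) => h; last by rewrite h eqxx in hb.
  + have [d ->] : exists d, k = (b + d.+1)%N by exists (k - b.+1)%N; lia.
    nia.
  + have [d ->] : exists d, b = (k + d.+1)%N by exists (b - k.+1)%N; lia.
    nia.
- have [d ->] : exists d, b = (m + d.+1)%N by exists (b - m.+1)%N; lia.
  have [c ->] : exists c, m = (k + c)%N by exists (m - k)%N; lia.
  nia.
Qed.

Definition cst (x : nat) : rat := (x.+1)%:R ^+ 2.

Lemma payoff_split x (hx : odd x) (b1 : bidfun x) :
  payoff b1 (half_bid x) =
  \sum_(v : 'I_(x.+1)) ((v%:R - (b1 v)%:R) * (Sn x./2 (b1 v))%:R) / cst x.
Proof.
rewrite /payoff; apply: eq_bigr => v _.
by rewrite -mulr_suml -mulr_sumr Sb.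
Qed.

Lemma term_lt x (v b : 'I_(x.+1)) : b != half_bid x v ->
  (v%:R - b%:R) * (Sn x./2 b)%:R <
  (v%:R - (half_bid x v)%:R) * (Sn x./2 (half_bid x v))%:R :> rat.
Proof.
move=> hb.
have hb' : (b : nat) != v./2.
  by apply: contra hb => /eqP h; apply/eqP/val_inj; rewrite /= half_val.
have hk : (v./2 <= x./2)%N by apply: half_leq; rewrite -ltnS.
have he : (odd v <= 1)%N by case: (odd v).
have H := key_nat he hk hb'.
have ev : (v./2.*2 + odd v)%N = v by rewrite addnC odd_double_half.
rewrite ev in H.
rewrite half_val.
move: H; rewrite -(ltr_nat rat) !natrD !natrM => H.
rewrite !mulrBl; lra.
Qed.

Lemma term_le x (v b : 'I_(x.+1)) :
  (v%:R - b%:R) * (Sn x./2 b)%:R <=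
  (v%:R - (half_bid x v)%:R) * (Sn x./2 (half_bid x v))%:R :> rat.
Proof.
case: (eqVneq b (half_bid x v)) => [->//|hb].
exact: ltW (term_lt hb).
Qed.

Lemma cst_gt0 x : 0 < cst x.
Proof. by rewrite /cst exprn_gt0 // ltr0n. Qed.

Lemma best_resp x (hx : odd x) (b1 : bidfun x) :
  payoff b1 (half_bid x) <= payoff (half_bid x) (half_bid x).
Proof.
rewrite !payoff_split //; apply: ler_sum => v _.
by rewrite ler_pM2r ?invr_gt0 ?cst_gt0 // term_le.
Qed.

Lemma not_dom x (hx : odd x) : ~ weakly_dominated (half_bid x).
Proof.
move=> [b' [Hall [g Hg]]].
case: (boolP [forall v, b' v == half_bid x v]) => H.
- have E : payoff b' g = payoff (half_bid x) g.
    by rewrite /payoff; apply: eq_bigr => v _; rewrite (eqP (forallP H v)).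
  by rewrite E ltxx in Hg.
- move/forallPn: H => [v hv].
  have S : payoff b' (half_bid x) < payoff (half_bid x) (half_bid x).
    rewrite !payoff_split // (bigD1 v) //= [X in _ < X](bigD1 v) //=.
    apply: ltr_leD.
      by rewrite ltr_pM2r ?invr_gt0 ?cst_gt0 // term_lt.
    apply: ler_sum => w _.
    by rewrite ler_pM2r ?invr_gt0 ?cst_gt0 // term_le.
  by move: (Hall (half_bid x)); rewrite leNgt S.
Qed.

Theorem proposition6 (x : nat) (hx : odd x) :
  is_symmetric_equilibrium (half_bid x).
Proof.
split; first by move=> b; apply: best_resp.
split; first by move=> b; apply: best_resp.
by split; apply: not_dom.
Qed.
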